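(* Let $U\in U(2)$ and $U_{\mathfrak s}=\frac12(U+U^T)$. Then the trace norm of $U_{\mathfrak s}$ (the sum of its singular values) equals $\sqrt{\operatorname{tr}[U\overline U]+2}$.
   Context: $\overline U$ is the entrywise complex conjugate of $U$. *)

(* Defs.v *)
From HB Require Import structures.
From mathcomp Require Import all_boot all_order all_algebra.
Set Implicit Arguments. Unset Strict Implicit. Unset Printing Implicit Defensive.
Import Order.TTheory GRing.Theory Num.Theory.
Local Open Scope ring_scope.

(* Complex numbers: an arbitrary numeric algebraically closed field C
   (e.g. complex R for a real closed / real field R, or algC). *)

Definition entry_conj {C : numClosedFieldType} {m n : nat} (A : 'M[C]_(m, n)) : 'M[C]_(m, n) :=
  map_mx Num.conj A.

Definition adjmx {C : numClosedFieldType} {m n : nat} (A : 'M[C]_(m, n)) : 'M[C]_(n, m) :=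
  (entry_conj A)^T.

Definition unitary {C : numClosedFieldType} {n : nat} (U : 'M[C]_n) : Prop :=
  U *m adjmx U = 1%:M.

(* The eigenvalues of A^* A, listed with multiplicity (roots of its
   characteristic polynomial, which splits since C is algebraically closed). *)
Definition sq_singular_values {C : numClosedFieldType} {n : nat} (A : 'M[C]_n) : seq C :=
  sval (closed_field_poly_normal (char_poly (adjmx A *m A))).

Definition singular_values {C : numClosedFieldType} {n : nat} (A : 'M[C]_n) : seq C :=
  [seq sqrtC x | x <- sq_singular_values A].

Definition trace_norm {C : numClosedFieldType} {n : nat} (A : 'M[C]_n) : C :=
  \sum_(s <- singular_values A) s.

(* Main.v *)
Require Import Defs.
From HB Require Import structures.
From mathcomp Require Import all_boot all_order all_algebra ring.
Import Order.TTheory GRing.Theory Num.Theory.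
Local Open Scope ring_scope.

Lemma cD {C : numClosedFieldType} (x y : C) : (x + y)^* = x^* + y^*. Proof. exact: rmorphD. Qed.
Lemma cM {C : numClosedFieldType} (x y : C) : (x * y)^* = x^* * y^*. Proof. exact: rmorphM. Qed.
Lemma cN {C : numClosedFieldType} (x : C) : (- x)^* = - x^*. Proof. exact: rmorphN. Qed.
Lemma cB {C : numClosedFieldType} (x y : C) : (x - y)^* = x^* - y^*. Proof. exact: rmorphB. Qed.
Lemma cV {C : numClosedFieldType} (x : C) : (x^-1)^* = (x^*)^-1. Proof. exact: fmorphV. Qed.
Lemma cn {C : numClosedFieldType} (n : nat) : (n%:R : C)^* = n%:R. Proof. exact: rmorph_nat. Qed.

Section Core.
Variable C : numClosedFieldType.
Variables a b d : C.
Hypothesis hd : d * d^* = 1.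
Hypothesis hab : a * a^* + b * b^* = 1.
Let c := - (d * b^*).
Let e := d * a^*.
Let w := b - d * b^*.
Let X := a * a^* + w * w^* / 4%:R.
Let h := (2%:R : C)^-1.

Lemma dn0 : d != 0.
Proof. by apply/eqP => d0; move: hd; rewrite d0 mul0r => /eqP; rewrite eq_sym oner_eq0. Qed.

Lemma hD : d^* = d^-1.
Proof. by rewrite -[LHS]mul1r -(mulVf dn0) -mulrA hd mulr1. Qed.

Lemma F1 : (h * (a + a))^* * (h * (a + a)) + (h * (c + b))^* * (h * (c + b))
  + ((h * (b + c))^* * (h * (b + c)) + (h * (e + e))^* * (h * (e + e))) = 2%:R * X.
Proof.
rewrite /X /w /c /e /h !(cD, cM, cN, cB, cV, cn, conjCK) hD.
by field; exact: dn0.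
Qed.

Lemma F2 : ((h * (a + a))^* * (h * (e + e))^* - (h * (c + b))^* * (h * (b + c))^*) *
   ((h * (a + a)) * (h * (e + e)) - (h * (b + c)) * (h * (c + b))) = X ^+ 2.
Proof.
rewrite /X /w /c /e /h !(cD, cM, cN, cB, cV, cn, conjCK) hD.
by field; exact: dn0.
Qed.

Lemma F3 : a * a^* + b * c^* + (c * b^* + e * e^*) + 2%:R = 4%:R * X.
Proof.
rewrite -[X in X + 2%:R = _]addr0.
have -> : (2%:R : C) = 2%:R * (a * a^* + b * b^*) by rewrite hab mulr1.
rewrite /X /w /c /e /h !(cD, cM, cN, cB, cV, cn, conjCK) hD.
by field; exact: dn0.
Qed.

Lemma X_ge0 : 0 <= X.
Proof. by rewrite /X addr_ge0 ?mul_conjC_ge0 // divr_ge0 ?mul_conjC_ge0 ?ler0n. Qed.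
End Core.
Lemma sum2 (R : nmodType) (F : 'I_2 -> R) : \sum_(k < 2) F k = F 0 + F 1.
Proof. rewrite !big_ord_recl big_ord0 addr0; congr (_ + F _); exact: val_inj. Qed.

Lemma det2 (R : comNzRingType) (A : 'M[R]_2) : \det A = A 0 0 * A 1 1 - A 0 1 * A 1 0.
Proof.
rewrite (expand_det_row _ ord0) !big_ord_recl big_ord0 /cofactor !det_mx11 !mxE /=.
rewrite addr0 !expr0 expr1.
have -> : lift (lift ord0 ord0) (0 : 'I_1) = 0 :> 'I_2 by apply: val_inj.
have -> : lift ord0 (0 : 'I_1) = 1 :> 'I_2 by apply: val_inj.
have -> : (ord0 : 'I_2) = 0 by apply: val_inj.
ring.
Qed.

Theorem lemma3 (C : numClosedFieldType) (U : 'M[C]_2) :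
  unitary U ->
  trace_norm ((2%:R)^-1 *: (U + U^T)) = sqrtC (\tr (U *m entry_conj U) + 2%:R).
Proof.
move=> hU.
have E i j : \sum_k U i k * (U j k)^* = (1%:M : 'M[C]_2) i j.
  by rewrite -hU mxE; apply: eq_bigr => k _; rewrite /adjmx /entry_conj !mxE.
have E00 := E 0 0; have E01 := E 0 1; have E11 := E 1 1.
rewrite !sum2 !mxE /= in E00 E01 E11.
set a : C := U 0 0 in E00 E01 E11 *; set b : C := U 0 1 in E00 E01 E11 *.
set c : C := U 1 0 in E00 E01 E11 *; set e : C := U 1 1 in E00 E01 E11 *.
pose d := a * e - b * c.
have E01' : a^* * c + b^* * e = 0.
  by move/(congr1 Num.conj): E01; rewrite !(cD, cM, conjCK) conjC0 mulrC [b^* * _]mulrC.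
have he : d * a^* = e.
  have : d * a^* - e = e * (a * a^* + b * b^* - 1) - b * (a^* * c + b^* * e) by rewrite /d; ring.
  by rewrite E00 E01' subrr !mulr0 subr0 => /eqP; rewrite subr_eq0 => /eqP.
have hc : - (d * b^*) = c.
  have : - (d * b^*) - c = c * (a * a^* + b * b^* - 1) - a * (a^* * c + b^* * e) by rewrite /d; ring.
  by rewrite E00 E01' subrr !mulr0 subr0 => /eqP; rewrite subr_eq0 => /eqP.
have hd : d * d^* = 1.
  rewrite -hc -he !(cN, cM, conjCK) in E11.
  transitivity (d * d^* * (a * a^* + b * b^*)); first by rewrite E00 mulr1.
  by apply: (etrans _ E11); ring.
rewrite /trace_norm /singular_values /sq_singular_values.
case: (closed_field_poly_normal _) => s hs /=.
rewrite (monicP (char_poly_monic _)) scale1r in hs.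
set S := (2%:R)^-1 *: (U + U^T) in hs *.
set M := adjmx S *m S in hs.
have := size_char_poly M; rewrite hs size_prod_XsubC => -[].
case: s hs => [|l1 [|l2 []]] //= hs _.
have h0 := char_poly_det M; rewrite hs coef0_prod_XsubC /= !big_cons big_nil in h0.
have h1 := char_poly_trace (n:=2) M isT.
rewrite hs (coefPn_prod_XsubC (ps:=[::l1;l2])) //= !big_cons big_nil in h1.
have trM : \tr M = 2%:R * (a * a^* + (b - d * b^*) * (b - d * b^*)^* / 4%:R).
  rewrite -(@F1 C a b d hd) /mxtrace sum2 !mxE !sum2 /adjmx /entry_conj !mxE.
  by rewrite -/a -/b -/c -/e -hc -he.
set X := a * a^* + (b - d * b^*) * (b - d * b^*)^* / 4%:R in trM.
have detM : \det M = X ^+ 2.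
  rewrite -(@F2 C a b d hd) det_mulmx !det2 /adjmx /entry_conj !mxE.
  by rewrite -/a -/b -/c -/e -hc -he.
have trU : \tr (U *m entry_conj U) + 2%:R = 4%:R * X.
  rewrite -(@F3 C a b d hd E00) /mxtrace sum2 !mxE !sum2 /entry_conj !mxE.
  by rewrite -/a -/b -/c -/e -hc -he.
have X0 : 0 <= X := @X_ge0 C a b d.
rewrite sqrrN expr1n !mul1r mulr1 detM in h0.
rewrite addr0 trM in h1; move/oppr_inj: h1 => h1.
have hl2 : l2 = 2%:R * X - l1 by rewrite -h1; ring.
have hl1 : l1 = X.
  have : (l1 - X) ^+ 2 = 0.
    transitivity (X ^+ 2 - l1 * l2); first by rewrite hl2; ring.
    by rewrite h0 subrr.
  by move/eqP; rewrite expf_eq0 /= subr_eq0 => /eqP.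
have {hl2} hl2 : l2 = X by rewrite hl2 hl1; ring.
rewrite trU hl1 hl2 !big_cons big_nil sqrtCM ?nnegrE ?ler0n //.
have -> : (4%:R : C) = 2%:R ^+ 2 by rewrite -natrX.
rewrite sqrCK ?ler0n //; ring.
Qed.
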